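(* Let $q>0$. For every $x\in\mathbb{R}$, $\mathcal{C}os_q x$ and $\mathcal{S}in_q x$ are real numbers and satisfy $-1\le \mathcal{C}os_q x\le 1$ and $-1\le \mathcal{S}in_q x\le1$.
   Context: For $q>0$ let $[k]=1+q+\dots+q^{k-1}$, $[n]!=[1]\cdots[n]$, and let $e_q^z=\sum_{n\ge0} z^n/[n]!$, $E_q^z=\sum_{n\ge0} q^{n(n-1)/2}z^n/[n]!$ be the standard $q$-exponentials, extended meromorphically to $\mathbb{C}$ (for $0<q<1$: $e_q^z=\prod_{k\ge0}(1-(1-q)q^kz)^{-1}$, $E_q^z=\prod_{k\ge0}(1+(1-q)q^kz)$; in general $E_q^z=e_{1/q}^z$; for $q=1$ both are $e^z$); their poles are real. The improved $q$-exponential is $\mathcal{E}_q^z:=e_q^{z/2}E_q^{z/2}$. For real $x$, $\mathcal{S}in_q x=\frac{\mathcal{E}_q^{ix}-\mathcal{E}_q^{-ix}}{2i}$ and $\mathcal{C}os_q x=\frac{\mathcal{E}_q^{ix}+\mathcal{E}_q^{-ix}}{2}$. *)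

(* Defs.v *)
From Stdlib Require Import Reals Lra ClassicalEpsilon.
Open Scope R_scope.

Definition C := (R * R)%type.
Definition Re (z : C) : R := fst z.
Definition Im (z : C) : R := snd z.
Definition C0 : C := (0, 0).
Definition C1 : C := (1, 0).
Definition Cadd (z w : C) : C := (fst z + fst w, snd z + snd w).
Definition Csub (z w : C) : C := (fst z - fst w, snd z - snd w).
Definition Cmul (z w : C) : C :=
  (fst z * fst w - snd z * snd w, fst z * snd w + snd z * fst w).
Definition Cscal (r : R) (z : C) : C := (r * fst z, r * snd z).
Definition Cinv (z : C) : C :=
  let d := fst z * fst z + snd z * snd z in (fst z / d, - snd z / d).
Definition Cdiv (z w : C) : C := Cmul z (Cinv w).
Definition Cexp (z : C) : C := (exp (fst z) * cos (snd z), exp (fst z) * sin (snd z)).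

Definition Ccv (u : nat -> C) (L : C) : Prop :=
  Un_cv (fun n => fst (u n)) (fst L) /\ Un_cv (fun n => snd (u n)) (snd L).
Definition Clim (u : nat -> C) : C := epsilon (inhabits C0) (fun L => Ccv u L).

Fixpoint Cprod (f : nat -> C) (N : nat) : C :=
  match N with O => C1 | S n => Cmul (Cprod f n) (f n) end.

(** For 0 < q < 1 (product formulas):
    e_q^z = prod_{k>=0} (1 - (1-q) q^k z)^{-1},
    E_q^z = prod_{k>=0} (1 + (1-q) q^k z). *)
Definition small_e (q : R) (z : C) : C :=
  Clim (fun N => Cinv (Cprod (fun k => Csub C1 (Cscal ((1 - q) * q ^ k) z)) N)).
Definition small_E (q : R) (z : C) : C :=
  Clim (fun N => Cprod (fun k => Cadd C1 (Cscal ((1 - q) * q ^ k) z)) N).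

(** General q > 0: q = 1 gives exp; q > 1 uses E_q = e_{1/q} (hence e_q = E_{1/q}). *)
Definition qexp_e (q : R) (z : C) : C :=
  if Rlt_dec q 1 then small_e q z
  else if Req_EM_T q 1 then Cexp z
  else small_E (/ q) z.
Definition qexp_E (q : R) (z : C) : C :=
  if Rlt_dec q 1 then small_E q z
  else if Req_EM_T q 1 then Cexp z
  else small_e (/ q) z.

Definition qexp_impr (q : R) (z : C) : C :=
  Cmul (qexp_e q (Cscal (/ 2) z)) (qexp_E q (Cscal (/ 2) z)).

Definition Sinq (q x : R) : C :=
  Cdiv (Csub (qexp_impr q (0, x)) (qexp_impr q (0, - x))) (0, 2).
Definition Cosq (q x : R) : C :=
  Cdiv (Cadd (qexp_impr q (0, x)) (qexp_impr q (0, - x))) (2, 0).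

(* Main.v *)
Require Import Defs.
From Stdlib Require Import Reals.
From Stdlib Require Import Lra Lia Psatz ClassicalEpsilon.
Open Scope R_scope.

Lemma Un_cv_ext (u v : nat -> R) l : (forall n, u n = v n) -> Un_cv u l -> Un_cv v l.
Proof. intros E H e He. destruct (H e He) as [N HN]. exists N. intros n Hn. rewrite <- E. auto. Qed.

Lemma Rinv_cv (u : nat -> R) l : l <> 0 -> Un_cv u l -> Un_cv (fun n => / u n) (/ l).
Proof.
  intros Hl H.
  assert (Hc : continuity_pt (/ (fun x => x)) l).
  { apply continuity_pt_inv; [apply derivable_continuous_pt; apply derivable_pt_id | exact Hl]. }
  exact (continuity_seq _ u l Hc H).
Qed.

Lemma geom_cauchy (v : nat -> R) D r : 0 <= r < 1 ->
  (forall n, Rabs (v (S n) - v n) <= D * r ^ n) -> exists l, Un_cv v l.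
Proof.
  intros [r0 r1] H.
  assert (HD : 0 <= D). { specialize (H 0%nat). simpl in H. pose proof (Rabs_pos (v 1%nat - v 0%nat)). lra. }
  assert (Hk : forall n k, Rabs (v (n + k)%nat - v n) <= D * (r ^ n - r ^ (n + k)) / (1 - r)).
  { intros n k. induction k as [|k IH].
    - rewrite Nat.add_0_r. unfold Rminus. rewrite !Rplus_opp_r, Rabs_R0, Rmult_0_r. unfold Rdiv. lra.
    - replace (n + S k)%nat with (S (n + k)) by lia.
      replace (v (S (n + k)) - v n) with ((v (S (n+k)) - v (n+k)%nat) + (v (n+k)%nat - v n)) by ring.
      eapply Rle_trans. apply Rabs_triang.
      specialize (H (n+k)%nat).
      replace (D * (r ^ n - r ^ S (n + k)) / (1 - r)) with (D * r ^ (n+k) + D * (r ^ n - r ^ (n + k)) / (1 - r)).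
      lra. simpl. field. lra. }
  assert (Hb : forall n m, (n <= m)%nat -> Rabs (v m - v n) <= D * r ^ n / (1 - r)).
  { intros n m Hnm. replace m with (n + (m - n))%nat by lia.
    eapply Rle_trans. apply Hk. unfold Rdiv. apply Rmult_le_compat_r.
    left. apply Rinv_0_lt_compat. lra. pose proof (pow_le r (n + (m-n)) r0). nra. }
  assert (Hc : Cauchy_crit v).
  { intros e He.
    destruct (pow_lt_1_zero r ltac:(rewrite Rabs_right; lra) (e * (1 - r) / (D + 1)))
      as [N HN].
    { apply Rmult_lt_0_compat. nra. apply Rinv_0_lt_compat. lra. }
    exists N. intros n m Hn Hm. unfold R_dist.
    assert (Hx : forall a b, (N <= a)%nat -> (a <= b)%nat -> Rabs (v b - v a) < e).
    { intros a b Ha Hab. eapply Rle_lt_trans. apply Hb; auto.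
      specialize (HN a Ha). rewrite Rabs_right in HN by (apply Rle_ge, pow_le; lra).
      apply (Rmult_lt_reg_r (1 - r)). lra.
      replace (D * r ^ a / (1 - r) * (1 - r)) with (D * r ^ a) by (field; lra).
      assert (D * r^a <= D * (e * (1 - r) / (D + 1))) by (apply Rmult_le_compat_l; lra).
      assert (D * (e * (1 - r) / (D + 1)) < e * (1 - r)).
      { replace (D * (e * (1 - r) / (D + 1))) with ((e * (1-r)) * (D / (D+1))) by (field; lra).
        assert (D / (D+1) < 1). { apply (Rmult_lt_reg_r (D+1)). lra. unfold Rdiv. rewrite Rmult_assoc, Rinv_l by lra. lra. }
        assert (0 < e * (1-r)) by nra. nra. }
      lra. }
    destruct (Nat.le_ge_cases n m) as [Hnm|Hnm].
    - rewrite <- Rabs_Ropp. replace (- (v n - v m)) with (v m - v n) by ring. auto.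
    - auto. }
  destruct (R_complete v Hc) as [l Hl]. eauto.
Qed.

Lemma exp_le' a b : a <= b -> exp a <= exp b.
Proof. intros [H|H]. left; apply exp_increasing; auto. subst; lra. Qed.

Lemma prod_cv (f : nat -> Defs.C) K r : 0 <= r < 1 ->
  (forall k, fst (f k) = 1) -> (forall k, Rabs (snd (f k)) <= K * r ^ k) ->
  exists L, Ccv (Cprod f) L /\ 1 <= fst L * fst L + snd L * snd L.
Proof.
  intros [r0 r1] H1 Hb.
  set (N := fun n => fst (Cprod f n) * fst (Cprod f n) + snd (Cprod f n) * snd (Cprod f n)).
  assert (Hstep : forall n, N (S n) = N n * (1 + snd (f n) * snd (f n))).
  { intros n. unfold N. simpl. unfold Cmul. simpl. rewrite H1. ring. }
  assert (Hge : forall n, 1 <= N n).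
  { induction n. unfold N; simpl; lra. rewrite Hstep. pose proof (Rle_0_sqr (snd (f n))). unfold Rsqr in *. nra. }
  set (rho := r * r).
  assert (Hb2 : forall k, snd (f k) * snd (f k) <= K * K * rho ^ k).
  { intros k. specialize (Hb k). pose proof (Rabs_pos (snd (f k))).
    unfold rho. rewrite Rpow_mult_distr.
    replace (snd (f k) * snd (f k)) with (Rabs (snd (f k)) * Rabs (snd (f k))).
    replace (K * K * (r ^ k * r ^ k)) with ((K * r^k) * (K * r^k)) by ring. nra.
    rewrite <- Rabs_mult. apply Rabs_right. apply Rle_ge, Rle_0_sqr. }
  assert (Hrho : 0 <= rho < 1) by (unfold rho; nra).
  assert (Hup : forall n, N n <= exp (K * K * (1 - rho ^ n) / (1 - rho))).
  { induction n.
    - unfold N. simpl. replace (K * K * (1 - 1) / (1 - rho)) with 0 by (field; lra). rewrite exp_0. lra.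
    - rewrite Hstep.
      replace (K * K * (1 - rho ^ S n) / (1 - rho)) with (K * K * (1 - rho ^ n) / (1 - rho) + K * K * rho ^ n)
        by (simpl; field; lra).
      rewrite exp_plus. apply Rmult_le_compat. pose proof (Hge n); lra.
      pose proof (Rle_0_sqr (snd (f n))); unfold Rsqr in *; lra. exact IHn.
      eapply Rle_trans. apply exp_ineq1_le. apply exp_le'. apply Hb2. }
  set (B := exp (K * K / (1 - rho))).
  assert (HB : forall n, N n <= B).
  { intros n. eapply Rle_trans. apply Hup. apply exp_le'.
    pose proof (pow_le rho n (proj1 Hrho)). pose proof (Rle_0_sqr K). unfold Rsqr in *.
    unfold Rdiv. apply Rmult_le_compat_r. left; apply Rinv_0_lt_compat; lra. nra. }
  set (M := 1 + B).
  assert (HM1 : forall n, Rabs (fst (Cprod f n)) <= M).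
  { intros n. specialize (HB n). unfold N in HB. pose proof (Rle_0_sqr (snd (Cprod f n))). unfold Rsqr in *.
    unfold M. destruct (Rabs_pos (fst (Cprod f n))).
    rewrite <- (Rabs_right 1) at 1 by lra.
    assert (Rabs (fst (Cprod f n)) * Rabs (fst (Cprod f n)) = fst (Cprod f n) * fst (Cprod f n)) by
      (rewrite <- Rabs_mult; apply Rabs_right, Rle_ge, Rle_0_sqr).
    rewrite Rabs_R1. nra. nra. }
  assert (HM2 : forall n, Rabs (snd (Cprod f n)) <= M).
  { intros n. specialize (HB n). unfold N in HB. pose proof (Rle_0_sqr (fst (Cprod f n))). unfold Rsqr in *.
    unfold M. 
    assert (Rabs (snd (Cprod f n)) * Rabs (snd (Cprod f n)) = snd (Cprod f n) * snd (Cprod f n)) by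
      (rewrite <- Rabs_mult; apply Rabs_right, Rle_ge, Rle_0_sqr).
    pose proof (Rabs_pos (snd (Cprod f n))). nra. }
  assert (HK : 0 <= K). { specialize (Hb 0%nat). simpl in Hb. pose proof (Rabs_pos (snd (f 0%nat))). lra. }
  destruct (geom_cauchy (fun n => fst (Cprod f n)) (M * K) r ltac:(lra)) as [l1 Hl1].
  { intros n. simpl. unfold Cmul; simpl. rewrite H1.
    replace (fst (Cprod f n) * 1 - snd (Cprod f n) * snd (f n) - fst (Cprod f n))
      with (- (snd (Cprod f n) * snd (f n))) by ring.
    rewrite Rabs_Ropp, Rabs_mult, Rmult_assoc. apply Rmult_le_compat; auto using Rabs_pos. }
  destruct (geom_cauchy (fun n => snd (Cprod f n)) (M * K) r ltac:(lra)) as [l2 Hl2].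
  { intros n. simpl. unfold Cmul; simpl. rewrite H1.
    replace (fst (Cprod f n) * snd (f n) + snd (Cprod f n) * 1 - snd (Cprod f n))
      with (fst (Cprod f n) * snd (f n)) by ring.
    rewrite Rabs_mult, Rmult_assoc. apply Rmult_le_compat; auto using Rabs_pos. }
  exists (l1, l2). split. split; assumption.
  simpl. apply Rle_cv_lim with (Un := fun _ => 1) (Vn := N). exact Hge.
  intros e He; exists 0%nat; intros; unfold R_dist; rewrite Rminus_diag, Rabs_R0; auto.
  apply CV_plus; apply CV_mult; auto.
Qed.

Lemma Clim_eq (u : nat -> Defs.C) L : Ccv u L -> Clim u = L.
Proof.
  intros H. unfold Clim.
  pose proof (epsilon_spec (inhabits C0) (fun L => Ccv u L) (ex_intro _ L H)) as H'.
  destruct (epsilon (inhabits C0) (fun L => Ccv u L)) as [a b]. destruct L as [c d].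
  destruct H as [Ha Hb], H' as [Hc Hd]. simpl in *.
  rewrite (UL_sequence _ _ _ Hc Ha), (UL_sequence _ _ _ Hd Hb). reflexivity.
Qed.

Lemma Ccv_conj (u v : nat -> Defs.C) a b : Ccv u (a, b) ->
  (forall n, v n = (fst (u n), - snd (u n))) -> Ccv v (a, - b).
Proof.
  intros [H1 H2] E. split; simpl in *.
  - apply (Un_cv_ext (fun n => fst (u n))); auto. intros n; rewrite E; reflexivity.
  - apply (Un_cv_ext (fun n => - snd (u n))). intros n; rewrite E; reflexivity.
    apply CV_opp; auto.
Qed.

Lemma Ccv_inv (u : nat -> Defs.C) a b : Ccv u (a, b) -> a * a + b * b <> 0 ->
  Ccv (fun n => Cinv (u n)) (Cinv (a, b)).
Proof.
  intros [H1 H2] Hd. simpl in *.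
  assert (Hdd : Un_cv (fun n => / (fst (u n) * fst (u n) + snd (u n) * snd (u n))) (/ (a * a + b * b))).
  { apply Rinv_cv; auto. apply CV_plus; apply CV_mult; auto. }
  split; unfold Cinv; simpl.
  - apply (Un_cv_ext (fun n => fst (u n) * / (fst (u n) * fst (u n) + snd (u n) * snd (u n)))).
    intros; reflexivity. apply CV_mult; auto.
  - apply (Un_cv_ext (fun n => - snd (u n) * / (fst (u n) * fst (u n) + snd (u n) * snd (u n)))).
    intros; reflexivity. apply CV_mult; auto. apply CV_opp; auto.
Qed.

Lemma Cprod_conj (f g : nat -> Defs.C) : (forall k, g k = (fst (f k), - snd (f k))) ->
  forall n, Cprod g n = (fst (Cprod f n), - snd (Cprod f n)).
Proof.
  intros E n. induction n. simpl. unfold Defs.C1. simpl. rewrite Ropp_0. reflexivity.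
  simpl. rewrite IHn, E. unfold Cmul; simpl. f_equal; ring.
Qed.

Lemma key (r : R) (z z' : Defs.C) : 0 < r < 1 -> fst z = 0 -> fst z' = 0 -> snd z' = - snd z ->
  exists p1 p2, 1 <= p1 * p1 + p2 * p2 /\
    small_E r z = (p1, p2) /\ small_e r z = Cinv (p1, - p2) /\
    small_E r z' = (p1, - p2) /\ small_e r z' = Cinv (p1, p2).
Proof.
  intros Hr Hz Hz' Hzz.
  set (f := fun k => Cadd Defs.C1 (Cscal ((1 - r) * r ^ k) z)).
  destruct (prod_cv f (Rabs (snd z)) r ltac:(lra)) as [[p1 p2] [HL Hn]].
  { intros k. unfold f, Cadd, Cscal, Defs.C1; simpl. rewrite Hz. ring. }
  { intros k. unfold f, Cadd, Cscal, Defs.C1; simpl. rewrite Rplus_0_l, !Rabs_mult.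
    rewrite (Rabs_right (1 - r)) by lra. rewrite (Rabs_right (r ^ k)) by (apply Rle_ge, pow_le; lra).
    pose proof (Rabs_pos (snd z)). pose proof (pow_le r k ltac:(lra)).
    assert (0 <= r ^ k * Rabs (snd z)) by nra. nra. }
  simpl in Hn. exists p1, p2. split; [exact Hn|].
  assert (Hd : p1 * p1 + p2 * p2 <> 0) by lra.
  assert (Hg : Ccv (Cprod (fun k => Csub Defs.C1 (Cscal ((1 - r) * r ^ k) z))) (p1, - p2)).
  { apply (Ccv_conj (Cprod f)); auto. apply Cprod_conj. intros k.
    unfold f, Csub, Cadd, Cscal, Defs.C1; simpl. rewrite Hz. f_equal; ring. }
  assert (Hf' : Ccv (Cprod (fun k => Cadd Defs.C1 (Cscal ((1 - r) * r ^ k) z'))) (p1, - p2)).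
  { apply (Ccv_conj (Cprod f)); auto. apply Cprod_conj. intros k.
    unfold f, Csub, Cadd, Cscal, Defs.C1; simpl. rewrite Hz, Hz', Hzz. f_equal; ring. }
  assert (Hg' : Ccv (Cprod (fun k => Csub Defs.C1 (Cscal ((1 - r) * r ^ k) z'))) (p1, - - p2)).
  { apply (Ccv_conj _ _ _ _ Hf'). apply Cprod_conj. intros k.
    unfold Csub, Cadd, Cscal, Defs.C1; simpl. rewrite Hz'. f_equal; ring. }
  rewrite Ropp_involutive in Hg'.
  unfold small_E, small_e. repeat split.
  - apply Clim_eq. exact HL.
  - apply Clim_eq. apply Ccv_inv; auto. lra.
  - apply Clim_eq. exact Hf'.
  - apply Clim_eq. apply Ccv_inv; auto.
Qed.

Lemma fin (w w' : Defs.C) : fst w' = fst w -> snd w' = - snd w ->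
  fst w * fst w + snd w * snd w = 1 ->
  Im (Cdiv (Cadd w w') (2, 0)) = 0 /\ Im (Cdiv (Csub w w') (0, 2)) = 0 /\
  -1 <= Re (Cdiv (Cadd w w') (2, 0)) <= 1 /\ -1 <= Re (Cdiv (Csub w w') (0, 2)) <= 1.
Proof.
  destruct w as [a b], w' as [a' b']. simpl. intros -> -> H.
  unfold Im, Re, Cdiv, Cadd, Csub, Cmul, Cinv; simpl.
  replace ((2 * 2 + 0 * 0)) with 4 by ring. replace (0 * 0 + 2 * 2) with 4 by ring.
  repeat split; try (field_simplify; nra).
Qed.

Lemma w_small p1 p2 : 1 <= p1 * p1 + p2 * p2 ->
  let w := Cmul (Cinv (p1, - p2)) (p1, p2) in let w' := Cmul (Cinv (p1, p2)) (p1, - p2) in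
  fst w' = fst w /\ snd w' = - snd w /\ fst w * fst w + snd w * snd w = 1.
Proof.
  intros H w w'. unfold w, w', Cmul, Cinv; simpl.
  assert (p1 * p1 + - p2 * - p2 <> 0) by nra. assert (p1 * p1 + p2 * p2 <> 0) by nra.
  set (d := p1 * p1 + p2 * p2). assert (Hd : d <> 0) by (unfold d; lra).
  replace (p1 * p1 + - p2 * - p2) with d by (unfold d; ring).
  repeat split; try (field; auto).
  unfold Rdiv. replace (p1 * / d * p1 - - p2 * / d * p2) with (d * / d) by (unfold d; ring).
  replace (p1 * / d * p2 + - - p2 * / d * p1) with (2 * p1 * p2 * / d) by ring.
  idtac.
unfold d. field. auto.
Qed.


Lemma Cmul_comm a b : Cmul a b = Cmul b a.
Proof. destruct a, b; unfold Cmul; simpl; f_equal; ring. Qed.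

Theorem corollary4 (q x : R) (hq : 0 < q) :
  Im (Cosq q x) = 0 /\ Im (Sinq q x) = 0 /\
  -1 <= Re (Cosq q x) <= 1 /\ -1 <= Re (Sinq q x) <= 1.
Proof.
  unfold Cosq, Sinq.
  set (z := Cscal (/ 2) (0, x)). set (z' := Cscal (/ 2) (0, - x)).
  assert (Hz : fst z = 0) by (unfold z, Cscal; simpl; ring).
  assert (Hz' : fst z' = 0) by (unfold z', Cscal; simpl; ring).
  assert (Hzz : snd z' = - snd z) by (unfold z, z', Cscal; simpl; ring).
  unfold qexp_impr, qexp_e, qexp_E. fold z z'.
  destruct (Rlt_dec q 1) as [Hq1|Hq1].
  - destruct (key q z z' ltac:(lra) Hz Hz' Hzz) as (p1 & p2 & Hn & E1 & E2 & E3 & E4).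
    rewrite E1, E2, E3, E4. destruct (w_small p1 p2 Hn) as (A & B & D). apply fin; auto.
  - destruct (Req_EM_T q 1) as [Hq|Hq].
    + apply fin; unfold z, z', Cscal, Cexp, Cmul; simpl; rewrite Rmult_0_r, exp_0; replace (/ 2 * - x) with (- (/ 2 * x)) by ring; try rewrite cos_neg; try rewrite sin_neg.
      * ring.
      * ring.
      * pose proof (sin2_cos2 (/2 * x)). unfold Rsqr in *. nra.
    + assert (Hr : 0 < / q < 1).
      { split. apply Rinv_0_lt_compat; lra. rewrite <- Rinv_1. apply Rinv_lt_contravar; lra. }
      destruct (key (/ q) z z' Hr Hz Hz' Hzz) as (p1 & p2 & Hn & E1 & E2 & E3 & E4).
      rewrite E1, E2, E3, E4, (Cmul_comm (p1, p2)), (Cmul_comm (p1, - p2)).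
      destruct (w_small p1 p2 Hn) as (A & B & D). apply fin; auto.
Qed.
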